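(* Let $Q=(q_n)_{n\ge1}$ be a basic sequence that is infinite in limit, and let $F_1,F_2$ be $Q$-special sequences. Then $|x_{F_1}-x_{F_2}|\le d(F_1,F_2)$.
   Context: A basic sequence is a sequence $Q=(q_n)_{n\ge1}$ of integers with $q_n\ge 2$; it is infinite in limit if $q_n\to\infty$. $\mathbb{N}$ denotes the positive integers. For each positive integer $j$ let $\nu_j=\min\{N : q_m\ge 2j^2 \text{ for all } m\ge N\}$. Define $l_1=\max(\nu_2-1,1)$ and, recursively for $i\ge 2$, $l_i=\max\big(\min\{k\in\mathbb{N} : l_1+2l_2+\cdots+(i-1)l_{i-1}+ik\ge \nu_{i+1}-1\},1\big)$. Put $L_i=\sum_{j=1}^i jl_j$ (with $L_0=0$). Let $S_Q=\{(a,b,c)\in\mathbb{N}^3 : b\le l_a,\ c\le a\}$ and $\phi_Q(a,b,c)=L_{a-1}+(b-1)a+c$; $\phi_Q$ is a bijection $S_Q\to\mathbb{N}$. A $Q$-special sequence is a family of integers $F=(F_{(a,b,c)})_{(a,b,c)\in S_Q}$ with $F_{(a,b,1)}=0$ for all $(a,b,1)\in S_Q$ and $\frac{F_{(a,b,c)}}{q_{\phi_Q(a,b,c)}}\in\left[\frac{c-1}{a}-\frac{1}{2a^2},\frac{c-1}{a}+\frac{1}{2a^2}\right]$ for $(a,b,c)\in S_Q$ with $c>1$. Let $\Gamma_Q$ be the set of $Q$-special sequences. For $F\in\Gamma_Q$ put $E_{F,n}=F_{\phi_Q^{-1}(n)}$ and $x_F=\sum_{n=1}^\infty \frac{E_{F,n}}{q_1q_2\cdots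 q_n}$. For $F_1\ne F_2$ in $\Gamma_Q$ let $\zeta_{F_1,F_2}=\min\{n : E_{F_1,n}\ne E_{F_2,n}\}$ and define $d(F_1,F_2)=\frac{1}{q_1q_2\cdots q_{\zeta_{F_1,F_2}-1}}$ (empty product equal to $1$); set $d(F,F)=0$. *)

(* Defs.v *)
From Stdlib Require Import Reals ZArith Arith Lia ClassicalEpsilon.
From Coquelicot Require Import Coquelicot.
Open Scope R_scope.

(* Q = (q_n)_{n>=1} is a function nat -> nat; the value q 0 is irrelevant. *)
Definition basic_seq (q : nat -> nat) : Prop :=
  forall n, (1 <= n)%nat -> (2 <= q n)%nat.

Definition infinite_in_limit (q : nat -> nat) : Prop :=
  forall M : nat, exists N : nat, forall n, (N <= n)%nat -> (M <= q n)%nat.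

(* the least natural number satisfying P (classical; junk if none exists) *)
Definition natmin (P : nat -> Prop) : nat :=
  epsilon (inhabits 0%nat) (fun n => P n /\ forall m, P m -> (n <= m)%nat).

Definition nu (q : nat -> nat) (j : nat) : nat :=
  natmin (fun N => (1 <= N)%nat /\ forall m, (N <= m)%nat -> (2 * j * j <= q m)%nat).

(* lL q i = (l_i, L_i), with lL q 0 = (junk, L_0 = 0) *)
Fixpoint lL (q : nat -> nat) (i : nat) : nat * nat :=
  match i with
  | O => (0%nat, 0%nat)
  | S i' =>
      let Lp := snd (lL q i') in
      let a := S i' in
      let l := if Nat.eqb i' 0 then Nat.max (nu q 2 - 1) 1
               else Nat.max (natmin (fun k => (1 <= k)%nat /\
                                 (nu q (a + 1) - 1 <= Lp + a * k)%nat)) 1 in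
      (l, (Lp + a * l)%nat)
  end.

Definition l_ (q : nat -> nat) (i : nat) : nat := fst (lL q i).
Definition L_ (q : nat -> nat) (i : nat) : nat := snd (lL q i).

Definition inS (q : nat -> nat) (t : nat * nat * nat) : Prop :=
  let '(a, b, c) := t in
  (1 <= a)%nat /\ (1 <= b)%nat /\ (1 <= c)%nat /\ (b <= l_ q a)%nat /\ (c <= a)%nat.

Definition phi (q : nat -> nat) (t : nat * nat * nat) : nat :=
  let '(a, b, c) := t in (L_ q (a - 1) + (b - 1) * a + c)%nat.

Definition phi_inv (q : nat -> nat) (n : nat) : nat * nat * nat :=
  epsilon (inhabits (1%nat, 1%nat, 1%nat)) (fun t => inS q t /\ phi q t = n).

(* Q-special sequences: families indexed by S_Q (values outside S_Q irrelevant) *)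
Definition special (q : nat -> nat) (F : nat * nat * nat -> Z) : Prop :=
  forall a b c, inS q (a, b, c) ->
    (c = 1%nat -> F (a, b, c) = 0%Z) /\
    ((1 < c)%nat ->
       let r := IZR (F (a, b, c)) / INR (q (phi q (a, b, c))) in
       let m := (INR c - 1) / INR a in
       m - 1 / (2 * INR a ^ 2) <= r /\ r <= m + 1 / (2 * INR a ^ 2)).

Definition E (q : nat -> nat) (F : nat * nat * nat -> Z) (n : nat) : Z :=
  F (phi_inv q n).

Fixpoint prodq (q : nat -> nat) (n : nat) : R :=
  match n with
  | O => 1
  | S m => prodq q m * INR (q (S m))
  end.

Definition xF (q : nat -> nat) (F : nat * nat * nat -> Z) : R :=
  Series (fun n => IZR (E q F (S n)) / prodq q (S n)).

Definition dQ (q : nat -> nat) (F1 F2 : nat * nat * nat -> Z) : R :=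
  match excluded_middle_informative (forall t, inS q t -> F1 t = F2 t) with
  | left _ => 0
  | right _ =>
      let zeta := natmin (fun n => (1 <= n)%nat /\ E q F1 n <> E q F2 n) in
      1 / prodq q (zeta - 1)
  end.

(* Main.v *)
Require Import Defs.
From Stdlib Require Import Reals ZArith Lia Lra Wf_nat ClassicalEpsilon.
From Coquelicot Require Import Coquelicot.
Open Scope R_scope.

Lemma natmin_spec (P : nat -> Prop) : (exists n, P n) ->
  P (natmin P) /\ forall m, P m -> (natmin P <= m)%nat.
Proof.
  intros H. unfold natmin. apply epsilon_spec.
  destruct (dec_inh_nat_subset_has_unique_least_element P (fun n => classic (P n)) H)
    as [x [Hx _]]. exists x; exact Hx.
Qed.

Lemma l_ge1 q i : (1 <= l_ q (S i))%nat.
Proof. unfold l_; simpl. destruct (Nat.eqb i 0); simpl; lia. Qed.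

Lemma L_S q i : L_ q (S i) = (L_ q i + S i * l_ q (S i))%nat.
Proof. unfold L_, l_; simpl. reflexivity. Qed.

Lemma L_0 q : L_ q 0 = 0%nat.
Proof. reflexivity. Qed.

Lemma L_ge q A : (A <= L_ q A)%nat.
Proof. induction A. simpl; lia. rewrite L_S. pose proof (l_ge1 q A). nia. Qed.

Lemma find_a q n : (1 <= n)%nat -> exists a, (1 <= a)%nat /\ (L_ q (a-1) < n <= L_ q a)%nat.
Proof.
  intros Hn.
  assert (forall A, (n <= L_ q A)%nat -> exists a, (1 <= a)%nat /\ (L_ q (a-1) < n <= L_ q a)%nat).
  { induction A; intros HA. rewrite L_0 in HA; lia.
    destruct (le_lt_dec n (L_ q A)) as [h|h]. apply IHA; exact h.
    exists (S A). split. lia. replace (S A - 1)%nat with A by lia. lia. }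
  apply (H n). apply L_ge.
Qed.

Lemma phi_surj q n : (1 <= n)%nat -> exists t, inS q t /\ phi q t = n.
Proof.
  intros Hn. destruct (find_a q n Hn) as [a [Ha [H1 H2]]].
  destruct a as [|a']; [lia|].
  rewrite L_S in H2. replace (S a' - 1)%nat with a' in H1 by lia.
  pose proof (l_ge1 q a').
  set (x := (n - L_ q a' - 1)%nat).
  assert (Hx : (x < S a' * l_ q (S a'))%nat) by (unfold x; lia).
  pose proof (Nat.div_mod x (S a') ltac:(lia)).
  pose proof (Nat.mod_upper_bound x (S a') ltac:(lia)).
  assert (x / S a' < l_ q (S a'))%nat by (apply Nat.div_lt_upper_bound; lia).
  exists (S a', S (x / S a'), S (x mod S a')). split.
  - unfold inS. repeat split; lia.
  - unfold phi. replace (S a' - 1)%nat with a' by lia.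
    replace (S (x / S a') - 1)%nat with (x / S a')%nat by lia. unfold x in *. nia.
Qed.

Lemma phi_inv_spec q n : (1 <= n)%nat -> inS q (phi_inv q n) /\ phi q (phi_inv q n) = n.
Proof.
  intros Hn. unfold phi_inv. apply epsilon_spec. apply phi_surj; auto.
Qed.

Lemma core_facts (A C : R) : 2 <= C <= A ->
  0 <= (C - 1) / A <= 1 /\ 0 < 1 / (2 * A ^ 2) <= 1/8.
Proof.
  intros [HC HA].
  assert (Hm : (C - 1) / A * A = C - 1) by (field; lra).
  assert (He : 1 / (2 * A ^ 2) * (2 * A ^ 2) = 1) by (field; lra).
  assert (HA2 : 8 <= 2 * A ^ 2) by nra.
  assert (0 < 1 / (2 * A ^ 2)) by (apply Rdiv_lt_0_compat; nra).
  split; [split|split]; try nra.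
Qed.

Lemma XrQ (X Q : R) : 0 < Q -> X = (X / Q) * Q.
Proof. intros; field; lra. Qed.

Lemma q_phi_ge2 q t : basic_seq q -> inS q t -> 2 <= INR (q (phi q t)).
Proof.
  intros Hb Ht. destruct t as [[a b] c]. destruct Ht as (?&?&?&?&?).
  assert (2 <= q (phi q (a,b,c)))%nat. apply Hb. change (phi q (a,b,c)) with (L_ q (a-1) + (b-1)*a + c)%nat.
nia.
  apply le_INR in H4. assert (INR 2 = 2) by (simpl; lra). lra.
Qed.

Lemma pt_bound q F t : basic_seq q -> special q F -> inS q t ->
  Rabs (IZR (F t)) <= 2 * INR (q (phi q t)).
Proof.
  intros Hb HF Ht. pose proof (q_phi_ge2 q t Hb Ht) as HQ.
  destruct t as [[a b] c]. pose proof Ht as Ht'. destruct Ht' as (?&?&?&?&?).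
  destruct (HF a b c Ht) as [Hc1 Hc2].
  destruct (Nat.eq_dec c 1) as [->|Hne].
  - rewrite Hc1 by reflexivity. rewrite Rabs_R0. lra.
  - specialize (Hc2 ltac:(lia)). cbv zeta in Hc2.
    set (Q := INR (q (phi q (a,b,c)))) in *.
    set (X := IZR (F (a,b,c))) in *.
    assert (HC : 2 <= INR c <= INR a).
    { split. replace 2 with (INR 2) by (simpl; lra). apply le_INR; lia. apply le_INR; lia. }
    destruct (core_facts _ _ HC) as [Hm He].
    rewrite (XrQ X Q) by lra. set (r := X / Q) in *.
    apply Rabs_le. split; nra.
Qed.

Lemma pt_diff q F1 F2 t : basic_seq q -> special q F1 -> special q F2 -> inS q t ->
  Rabs (IZR (F1 t) - IZR (F2 t)) <= INR (q (phi q t)) / 4.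
Proof.
  intros Hb HF1 HF2 Ht. pose proof (q_phi_ge2 q t Hb Ht) as HQ.
  destruct t as [[a b] c]. pose proof Ht as Ht'. destruct Ht' as (?&?&?&?&?).
  destruct (HF1 a b c Ht) as [Hc1 Hc2].
  destruct (HF2 a b c Ht) as [Hd1 Hd2].
  destruct (Nat.eq_dec c 1) as [->|Hne].
  - rewrite Hc1, Hd1 by reflexivity. rewrite Rminus_0_r, Rabs_R0. lra.
  - specialize (Hc2 ltac:(lia)). specialize (Hd2 ltac:(lia)). cbv zeta in Hc2, Hd2.
    set (Q := INR (q (phi q (a,b,c)))) in *.
    set (X := IZR (F1 (a,b,c))) in *.
    set (Y := IZR (F2 (a,b,c))) in *.
    assert (HC : 2 <= INR c <= INR a).
    { split. replace 2 with (INR 2) by (simpl; lra). apply le_INR; lia. apply le_INR; lia. }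
    destruct (core_facts _ _ HC) as [Hm He].
    rewrite (XrQ X Q), (XrQ Y Q) by lra. set (r := X / Q) in *. set (s := Y / Q) in *.
    apply Rabs_le. split; nra.
Qed.

Lemma prodq_pos q n : basic_seq q -> 0 < prodq q n.
Proof.
  intros Hb. induction n; simpl. lra.
  assert (2 <= q (S n))%nat by (apply Hb; lia).
  apply le_INR in H. assert (INR 2 = 2) by (simpl; lra). nra.
Qed.

Lemma prodq_S q n : basic_seq q -> 2 * prodq q n <= prodq q (S n).
Proof.
  intros Hb. pose proof (prodq_pos q n Hb). simpl.
  assert (2 <= q (S n))%nat by (apply Hb; lia).
  apply le_INR in H0. assert (INR 2 = 2) by (simpl; lra). nra.
Qed.

Lemma prodq_geom q n : basic_seq q -> 1 <= prodq q n * (1/2)^n.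
Proof.
  intros Hb. induction n. simpl; lra.
  pose proof (prodq_S q n Hb). pose proof (prodq_pos q n Hb).
  assert (0 < (1/2)^n) by (apply pow_lt; lra).
  simpl pow. nra.
Qed.

Lemma w_S q n : basic_seq q -> / prodq q (S n) <= / prodq q n / 2.
Proof.
  intros Hb. pose proof (prodq_S q n Hb). pose proof (prodq_pos q n Hb).
  assert (/ prodq q (S n) * prodq q (S n) = 1) by (field; lra).
  assert (/ prodq q n * prodq q n = 1) by (field; lra).
  assert (0 < / prodq q (S n)) by (apply Rinv_0_lt_compat; lra).
  nra.
Qed.

Lemma w_geom q n : basic_seq q -> / prodq q n <= (1/2)^n.
Proof.
  intros Hb. pose proof (prodq_geom q n Hb). pose proof (prodq_pos q n Hb).
  assert (/ prodq q n * prodq q n = 1) by (field; lra).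
  assert (0 < (1/2)^n) by (apply pow_lt; lra).
  nra.
Qed.

Lemma abs_div_le X B D : 0 < D -> Rabs X <= B -> Rabs (X / D) <= B / D.
Proof.
  intros HD HX. rewrite Rabs_div by lra. rewrite (Rabs_pos_eq D) by lra.
  unfold Rdiv. apply Rmult_le_compat_r. left; apply Rinv_0_lt_compat; lra. exact HX.
Qed.

Lemma zero_sum (f : nat -> R) k : (forall n, (n < k)%nat -> f n = 0) ->
  forall N, (S N <= k)%nat -> sum_f_R0 f N = 0.
Proof.
  intros Hz. induction N; intros HN; simpl. apply Hz; lia.
  rewrite IHN by lia. rewrite Hz by lia. lra.
Qed.

Lemma part_sum (f w : nat -> R) k :
  (forall n, (n < k)%nat -> f n = 0) ->
  (forall n, f n <= w n / 4) ->
  (forall n, w (S n) <= w n / 2) ->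
  forall N, (k <= S N)%nat -> sum_f_R0 f N <= (w k - w (S N)) / 2.
Proof.
  intros Hz Hb Hw. induction N; intros HN.
  - destruct (Nat.eq_dec k 1) as [->|Hk].
    + rewrite (zero_sum f 1 Hz 0) by lia. lra.
    + assert (k = 0%nat) by lia. subst k. simpl. specialize (Hb 0%nat). specialize (Hw 0%nat). lra.
  - destruct (Nat.eq_dec k (S (S N))) as [->|Hk].
    + rewrite (zero_sum f (S (S N)) Hz (S N)) by lia. lra.
    + simpl. specialize (IHN ltac:(lia)). specialize (Hb (S N)). specialize (Hw (S N)). lra.
Qed.

Lemma series_bound (a : nat -> R) B : ex_series a -> (forall N, sum_f_R0 a N <= B) -> Series a <= B.
Proof.
  intros He HN. pose proof (Series_correct a He) as Hs.
  assert (Rbar_le (Series a) B).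
  { apply (is_lim_seq_le (sum_n a) (fun _ => B)).
    intros n. rewrite sum_n_Reals. apply HN.
    exact Hs. apply is_lim_seq_const. }
  simpl in H. exact H.
Qed.

Lemma u_bound q F n : basic_seq q -> special q F ->
  Rabs (IZR (E q F (S n)) / prodq q (S n)) <= 2 * / prodq q n.
Proof.
  intros Hb HF. destruct (phi_inv_spec q (S n) ltac:(lia)) as [Hin Hph].
  unfold E. pose proof (pt_bound q F _ Hb HF Hin) as H. rewrite Hph in H.
  pose proof (prodq_pos q n Hb) as HP. pose proof (q_phi_ge2 q _ Hb Hin) as HQ. rewrite Hph in HQ.
  replace (2 * / prodq q n) with (2 * INR (q (S n)) / prodq q (S n)) by (simpl; field; lra).
  apply abs_div_le. apply prodq_pos; auto. exact H.
Qed.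

Lemma d_bound q F1 F2 n : basic_seq q -> special q F1 -> special q F2 ->
  Rabs (IZR (E q F1 (S n)) / prodq q (S n) - IZR (E q F2 (S n)) / prodq q (S n))
    <= / prodq q n / 4.
Proof.
  intros Hb HF1 HF2. destruct (phi_inv_spec q (S n) ltac:(lia)) as [Hin Hph].
  unfold E. pose proof (pt_diff q F1 F2 _ Hb HF1 HF2 Hin) as H. rewrite Hph in H.
  pose proof (prodq_pos q n Hb) as HP. pose proof (q_phi_ge2 q _ Hb Hin) as HQ. rewrite Hph in HQ.
  pose proof (prodq_pos q (S n) Hb) as HP'.
  replace (/ prodq q n / 4) with ((INR (q (S n)) / 4) / prodq q (S n)) by (simpl; field; lra).
  replace (IZR (F1 (phi_inv q (S n))) / prodq q (S n) - IZR (F2 (phi_inv q (S n))) / prodq q (S n))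
    with ((IZR (F1 (phi_inv q (S n))) - IZR (F2 (phi_inv q (S n)))) / prodq q (S n)) by (field; lra).
  apply abs_div_le. exact HP'. exact H.
Qed.

Lemma ex_geom c : ex_series (fun n => c * (1/2)^n).
Proof.
  apply (ex_series_ext (fun n => scal c ((1/2)^n))). intros; reflexivity.
  apply (ex_series_scal_l c (fun n => (1/2)^n)). apply ex_series_geom. rewrite Rabs_pos_eq; lra.
Qed.

Theorem mainTheorem18 (q : nat -> nat) (Hbasic : basic_seq q)
  (Hinf : infinite_in_limit q) (F1 F2 : nat * nat * nat -> Z)
  (H1 : special q F1) (H2 : special q F2) :
  Rabs (xF q F1 - xF q F2) <= dQ q F1 F2.
Proof.
  set (u1 := fun n => IZR (E q F1 (S n)) / prodq q (S n)).
  set (u2 := fun n => IZR (E q F2 (S n)) / prodq q (S n)).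
  assert (ex1 : ex_series u1).
  { apply (@ex_series_le R_AbsRing R_CompleteNormedModule u1 (fun n => 2 * (1/2)^n)); [|apply ex_geom].
    intros n. change (norm (u1 n)) with (Rabs (u1 n)).
    pose proof (u_bound q F1 n Hbasic H1). pose proof (w_geom q n Hbasic). unfold u1. lra. }
  assert (ex2 : ex_series u2).
  { apply (@ex_series_le R_AbsRing R_CompleteNormedModule u2 (fun n => 2 * (1/2)^n)); [|apply ex_geom].
    intros n. change (norm (u2 n)) with (Rabs (u2 n)).
    pose proof (u_bound q F2 n Hbasic H2). pose proof (w_geom q n Hbasic). unfold u2. lra. }
  assert (Hd0 : 0 <= dQ q F1 F2).
  { unfold dQ; destruct excluded_middle_informative; [lra|].
    unfold Rdiv; rewrite Rmult_1_l; left; apply Rinv_0_lt_compat, prodq_pos; auto. }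
  destruct (classic (exists n, (1 <= n)%nat /\ E q F1 n <> E q F2 n)) as [Hex|Hnex].
  2: { assert (xF q F1 = xF q F2).
       { unfold xF. apply Series_ext. intros n.
         destruct (Z.eq_dec (E q F1 (S n)) (E q F2 (S n))) as [e|e].
         rewrite e; reflexivity. exfalso; apply Hnex; exists (S n); split; [lia|exact e]. }
       rewrite H, Rminus_diag_eq, Rabs_R0; auto. }
  unfold dQ. destruct excluded_middle_informative as [Hall|Hnall].
  { exfalso. destruct Hex as [n [Hn Hne]]. apply Hne. unfold E. apply Hall. apply phi_inv_spec; auto. }
  destruct (natmin_spec _ Hex) as [[Hz1 Hz2] Hzmin].
  set (zeta := natmin _) in *.
  set (k := (zeta - 1)%nat).
  set (d := fun n => u1 n - u2 n).
  assert (Hxd : xF q F1 - xF q F2 = Series d).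
  { unfold d. rewrite Series_minus; auto. }
  assert (Hdz : forall n, (n < k)%nat -> Rabs (d n) = 0).
  { intros n Hn. unfold d, u1, u2.
    destruct (Z.eq_dec (E q F1 (S n)) (E q F2 (S n))) as [e|e].
    rewrite e, Rminus_diag_eq, Rabs_R0 by reflexivity; reflexivity.
    exfalso. assert (zeta <= S n)%nat by (apply Hzmin; split; [lia|exact e]). lia. }
  assert (Hdb : forall n, Rabs (d n) <= / prodq q n / 4) by (intros; apply d_bound; auto).
  assert (exd : ex_series (fun n => Rabs (d n))).
  { apply (@ex_series_le R_AbsRing R_CompleteNormedModule (fun n => Rabs (d n)) (fun n => 1 * (1/2)^n)); [|apply ex_geom].
    intros n. change (norm (Rabs (d n))) with (Rabs (Rabs (d n))). rewrite Rabs_Rabsolu.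
    pose proof (Hdb n). pose proof (w_geom q n Hbasic). pose proof (prodq_pos q n Hbasic).
    assert (0 < / prodq q n) by (apply Rinv_0_lt_compat; lra). lra. }
  rewrite Hxd. eapply Rle_trans. apply Series_Rabs, exd.
  assert (0 < / prodq q k) by (apply Rinv_0_lt_compat, prodq_pos; auto).
  replace (1 / prodq q k) with (/ prodq q k) by (unfold Rdiv; ring).
  apply series_bound. exact exd.
  intros N. destruct (le_lt_dec k (S N)) as [l|l].
  - pose proof (part_sum (fun n => Rabs (d n)) (fun n => / prodq q n) k Hdz Hdb
      (fun n => w_S q n Hbasic) N l).
    assert (0 < / prodq q (S N)) by (apply Rinv_0_lt_compat, prodq_pos; auto).
    cbv beta in H0. lra.
  - rewrite (zero_sum _ k Hdz N) by lia. lra.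
Qed.
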